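(* Consider the following process on a finite vertex set $V=\{1,\dots,p\}$. One maintains an ordered list of vertex subsets (''cliques'') $[C_1,\dots,C_m]$ and a set of outstanding vertices $O=V\setminus\bigcup_i C_i$; the associated graph $G$ on $V$ has an edge between two distinct vertices iff they lie in a common $C_i$. Initially the list is some list $C_I=[C_1,\dots,C_m]$ of nonempty subsets that is a perfect sequence of sets in the graph it induces (for instance a single nonempty subset). While $O\neq\emptyset$, a step chooses a clique $C_a$ in the list, a vertex $v\in O$ and a subset $S\subseteq C_a$, and then: if $S$ is a nonempty proper subset of $C_a$, the clique $S\cup\{v\}$ is appended at the end of the list; if $S=C_a$, the entry $C_a$ is replaced in place by $C_a\cup\{v\}$; if $S=\emptyset$, the clique $\{v\}$ is appended at the end of the list; finally $v$ is removed from $O$. (In the MFCF algorithm the triple $(C_a,v,S)$ is chosen by maximising a gain function, but the claim concerns any such choices.) Then at every stage, and in particular at termination, the ordered list of cliques is a perfect sequence of sets.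
   Context: An ordering $[C_1,\dots,C_m]$ of subsets has the running intersection property if for every $i$ with $2\le i\le m$ there is $j<i$ with $C_i\cap(C_1\cup\dots\cup C_{i-1})\subseteq C_j$; the sets $S_i=C_i\cap(C_1\cup\dots\cup C_{i-1})$ are the separators. The ordering is a perfect sequence of sets (perfect order) if it has the running intersection property and every separator $S_i$ is complete (all pairs of its vertices are adjacent) in the graph $G$. *)

(* Defs.v *)
From mathcomp Require Import all_boot.
Set Implicit Arguments. Unset Strict Implicit. Unset Printing Implicit Defensive.

Section MFCF.
Variable T : finType.

Definition induced_edge (L : seq {set T}) : rel T :=
  fun x y => (x != y) && has (fun C : {set T} => (x \in C) && (y \in C)) L.

(* C_1 u ... u C_{i} (0-indexed: union of the first i entries) *)
Definition prefix_union (L : seq {set T}) (i : nat) : {set T} :=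
  \bigcup_(C <- take i L) C.

Definition separator (L : seq {set T}) (i : nat) : {set T} :=
  nth set0 L i :&: prefix_union L i.

Definition running_intersection (L : seq {set T}) : Prop :=
  forall i, 0 < i < size L ->
    exists2 j, j < i & separator L i \subset nth set0 L j.

Definition complete_in (e : rel T) (S : {set T}) : Prop :=
  {in S &, forall x y, x != y -> e x y}.

Definition perfect_sequence (e : rel T) (L : seq {set T}) : Prop :=
  running_intersection L /\
  forall i, 0 < i < size L -> complete_in e (separator L i).

Definition outstanding (L : seq {set T}) : {set T} :=
  ~: \bigcup_(C <- L) C.

Definition mfcf_update (L : seq {set T}) (a : nat) (v : T) (S : {set T}) :=
  let Ca := nth set0 L a in
  if S == set0 then rcons L [set v]
  else if S == Ca then set_nth set0 L a (Ca :|: [set v])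
  else rcons L (v |: S).

Inductive mfcf_step (L : seq {set T}) : seq {set T} -> Prop :=
| MfcfStep (a : nat) (v : T) (S : {set T}) :
    a < size L -> v \in outstanding L -> S \subset nth set0 L a ->
    mfcf_step L (mfcf_update L a v S).

Inductive mfcf_reachable (L0 : seq {set T}) : seq {set T} -> Prop :=
| MfcfRefl : mfcf_reachable L0 L0
| MfcfTrans L L' : mfcf_reachable L0 L -> mfcf_step L L' -> mfcf_reachable L0 L'.

End MFCF.

(* Main.v *)
Require Import Defs.
From mathcomp Require Import all_boot.
Set Implicit Arguments. Unset Strict Implicit. Unset Printing Implicit Defensive.

Section Aux.
Variable T : finType.
Implicit Types (L : seq {set T}) (X : {set T}).

Lemma mem_prefix x L i :
  reflect (exists2 k, k < i & x \in nth set0 L k) (x \in prefix_union L i).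
Proof.
rewrite /prefix_union.
elim: L i => [|C L IH] i.
  rewrite big_nil in_set0; apply: (iffP idP) => // -[k _]; by rewrite nth_nil in_set0.
case: i => [|i].
  rewrite take0 big_nil in_set0; apply: (iffP idP) => // -[k]; by [].
rewrite /= big_cons in_setU; apply: (iffP orP).
  case=> [xC|]; first by exists 0.
  by case/IH => k ki xk; exists k.+1.
case=> [[|k]] /= ki xk; first by left.
by right; apply/IH; exists k.
Qed.

Lemma notin_all v L k : v \in outstanding L -> v \notin nth set0 L k.
Proof.
rewrite /outstanding in_setC => H; apply/negP => vk.
move: H; have -> : \bigcup_(C <- L) C = prefix_union L (size L) by rewrite /prefix_union take_size.
case/negP; apply/mem_prefix; exists k => //.
case: (ltnP k (size L)) => // hk; by rewrite nth_default ?in_set0 in vk.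
Qed.

Lemma edge_mono L L' x y :
  (forall C, C \in L -> exists2 C', C' \in L' & C \subset C') ->
  induced_edge L x y -> induced_edge L' x y.
Proof.
move=> H /andP [nxy /hasP [C CL /andP [xC yC]]]; apply/andP; split => //.
have [C' C'L sub] := H C CL; apply/hasP; exists C' => //.
by rewrite !(subsetP sub).
Qed.

Lemma edge_in L C x y : C \in L -> x \in C -> y \in C -> x != y -> induced_edge L x y.
Proof. by move=> CL xC yC nxy; apply/andP; split => //; apply/hasP; exists C => //; rewrite xC yC. Qed.

Lemma perfect_rcons L X :
  perfect_sequence (induced_edge L) L ->
  (exists2 j, j < size L & X :&: prefix_union L (size L) \subset nth set0 L j) ->
  perfect_sequence (induced_edge (rcons L X)) (rcons L X).
Proof.
move=> [RI CP] [j jL sub].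
have Hpre i : i <= size L -> prefix_union (rcons L X) i = prefix_union L i.
  by move=> hi; rewrite /prefix_union -cats1 takel_cat.
have Hsep i : i < size L -> separator (rcons L X) i = separator L i.
  by move=> hi; rewrite /separator Hpre 1?ltnW // nth_rcons hi.
have Hsepl : separator (rcons L X) (size L) = X :&: prefix_union L (size L).
  by rewrite /separator Hpre // nth_rcons ltnn eqxx.
have mono x y : induced_edge L x y -> induced_edge (rcons L X) x y.
  apply: edge_mono => C CL; exists C; by rewrite ?mem_rcons ?in_cons ?CL ?orbT.
rewrite /perfect_sequence /running_intersection size_rcons; split.
  move=> i /andP [i0]; rewrite ltnS leq_eqVlt => /orP [/eqP ->|hi].
    exists j => //; by rewrite Hsepl nth_rcons jL.
  have [k ki sk] := RI i (introT andP (conj i0 hi)); exists k => //.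
  by rewrite Hsep // nth_rcons (ltn_trans ki hi).
move=> i /andP [i0]; rewrite ltnS leq_eqVlt => /orP [/eqP ->|hi].
  rewrite Hsepl => x y xs ys nxy.
  apply: (@edge_in _ (nth set0 L j)); rewrite ?(subsetP sub) //.
  by rewrite mem_rcons in_cons mem_nth ?orbT.
rewrite Hsep // => x y xs ys nxy; apply: mono; exact: (CP i (introT andP (conj i0 hi))).
Qed.

Lemma perfect_set_nth L a v :
  perfect_sequence (induced_edge L) L -> a < size L -> v \in outstanding L ->
  let L' := set_nth set0 L a (nth set0 L a :|: [set v]) in
  perfect_sequence (induced_edge L') L'.
Proof.
move=> [RI CP] aL vO L'.
have sz : size L' = size L by rewrite size_set_nth; apply/maxn_idPr.
have nsub k : nth set0 L k \subset nth set0 L' k.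
  rewrite nth_set_nth /=; case: eqP => [->|] //; exact: subsetUl.
have nsub2 k x : x \in nth set0 L' k -> x != v -> x \in nth set0 L k.
  rewrite nth_set_nth /=; case: eqP => [->|_] //; rewrite in_setU in_set1 => /orP [//|/eqP ->]; by rewrite eqxx.
have ssub i : separator L' i \subset separator L i.
  apply/subsetP => x; rewrite /separator !in_setI => /andP [xi /mem_prefix [k ki xk]].
  have xv : x != v.
    apply/eqP => exv; subst x.
    move: xk; rewrite nth_set_nth /=; case: eqP => [ka|_]; last by rewrite (negbTE (notin_all _ vO)).
    move: xi; rewrite nth_set_nth /=; case: eqP => [ia|_]; last by rewrite (negbTE (notin_all _ vO)).
    by move: ki; rewrite ka ia ltnn.
  rewrite (nsub2 _ _ xi xv) /=; apply/mem_prefix; exists k => //; exact: nsub2 xk xv.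
have mono x y : induced_edge L x y -> induced_edge L' x y.
  apply: edge_mono => C /(nthP set0) [k kL <-]; exists (nth set0 L' k) => //.
  by apply: mem_nth; rewrite sz.
rewrite /perfect_sequence /running_intersection sz; split.
  move=> i hi; have [k ki sk] := RI i hi; exists k => //.
  exact: subset_trans (ssub i) (subset_trans sk (nsub k)).
move=> i hi x y xs ys nxy; apply: mono; apply: (CP i hi) => //; exact: (subsetP (ssub i)).
Qed.

Lemma step_perfect L L' :
  perfect_sequence (induced_edge L) L -> mfcf_step L L' ->
  perfect_sequence (induced_edge L') L'.
Proof.
move=> PL [a v S aL vO SC]; rewrite /mfcf_update.
case: eqP => [S0|Sn0].
  apply: perfect_rcons => //; exists 0; first exact: leq_ltn_trans aL.
  apply/subsetP => x; rewrite !in_setI in_set1 => /andP [/eqP -> /mem_prefix [k _ vk]].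
  by rewrite (negbTE (notin_all _ vO)) in vk.
case: eqP => [SCa|SnCa].
  exact: perfect_set_nth.
apply: perfect_rcons => //; exists a => //.
apply/subsetP => x; rewrite !in_setI in_setU1 => /andP [/orP [/eqP ->|xS] /mem_prefix [k _ vk]].
  by rewrite (negbTE (notin_all _ vO)) in vk.
exact: (subsetP SC).
Qed.

End Aux.

Theorem theorem13 (p : nat) (CI L : seq {set 'I_p}) :
  all (fun C => C != set0) CI ->
  perfect_sequence (induced_edge CI) CI ->
  mfcf_reachable CI L ->
  perfect_sequence (induced_edge L) L.
Proof.
move=> _ P0; elim => // L1 L2 _ IH st; exact: step_perfect IH st.
Qed.
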